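(* Let $\pi$ be uniform on $\mathrm{PF}_n$ and $Z(\pi)=\#\{i:\pi_i=1\}$. Then for each fixed integer $j\ge0$, $P(Z(\pi)=1+j)\to\frac{1}{e\,j!}$ as $n\to\infty$.
   Context: A parking function of length $n$ is a sequence $(\pi_1,\dots,\pi_n)$ with $1\le\pi_i\le n$ such that $\#\{t:\pi_t\le i\}\ge i$ for all $1\le i\le n$; $\mathrm{PF}_n$ denotes the set of these. *)

(* Defs.v *)
From Stdlib Require Import Reals Arith List.
Import ListNotations.
From Stdlib Require Import Bool.
Local Open Scope bool_scope.
Open Scope R_scope.

Fixpoint all_seqs (n k : nat) : list (list nat) :=
  match k with
  | O => [ [] ]
  | S k' => flat_map (fun x => map (cons x) (all_seqs n k')) (seq 1 n)
  end.

Definition count_le (p : list nat) (i : nat) : nat :=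
  length (filter (fun x => Nat.leb x i) p).

Definition is_pf (n : nat) (p : list nat) : bool :=
  Nat.eqb (length p) n
  && forallb (fun x => Nat.leb 1 x && Nat.leb x n) p
  && forallb (fun i => Nat.leb i (count_le p i)) (seq 1 n).

(* PF_n, as an explicit duplicate-free enumeration. *)
Definition PF (n : nat) : list (list nat) := filter (is_pf n) (all_seqs n n).

Definition Z (p : list nat) : nat := length (filter (fun x => Nat.eqb x 1) p).

Definition probZ (n m : nat) : R :=
  INR (length (filter (fun p => Nat.eqb (Z p) m) (PF n))) / INR (length (PF n)).

(* Main.v *)
Require Import Defs.
From Coquelicot Require Import Coquelicot.
From Stdlib Require Import Reals Arith List Lia Lra.
Import ListNotations.
Local Open Scope bool_scope.
Open Scope R_scope.

Definition shr (p : list nat) : list nat := map pred (filter (fun x => negb (Nat.eqb x 1)) p).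
Definition condA (a M : nat) (q : list nat) : bool :=
  forallb (fun i => Nat.leb (i+1) (count_le q i + a)) (seq 1 M).

Fixpoint bin (n k : nat) : nat :=
  match n, k with
  | _, O => 1%nat
  | O, S _ => 0%nat
  | S n', S k' => (bin n' k' + bin n' k)%nat
  end.

Lemma bin_0 n : bin n 0 = 1%nat.
Proof. destruct n; reflexivity. Qed.

Fixpoint sumN (f : nat -> nat) (n : nat) : nat :=
  match n with O => 0%nat | S n' => (sumN f n' + f n')%nat end.

Lemma all_seqs_in N m p : In p (all_seqs N m) -> length p = m /\ Forall (fun x => 1 <= x <= N)%nat p.
Proof.
  revert p; induction m; simpl; intros p H.
  - destruct H as [<-|[]]; auto.
  - apply in_flat_map in H as [x [Hx Hp]]. apply in_map_iff in Hp as [q [<- Hq]].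
    apply in_seq in Hx. destruct (IHm q Hq). simpl; split; auto. constructor; auto; lia.
Qed.

Lemma len_filter_map_cons (P : list nat -> bool) a L :
  length (filter P (map (@cons nat a) L)) = length (filter (fun p => P (a::p)) L).
Proof. induction L; simpl; auto. destruct (P (a::a0)); simpl; auto. Qed.

Lemma len_filter_flat P L l : length (filter P (flat_map (fun x => map (@cons nat x) L) l))
  = list_sum (map (fun x => length (filter (fun p => P (x::p)) L)) l).
Proof.
  induction l; simpl; auto. rewrite filter_app, length_app, IHl, len_filter_map_cons; auto.
Qed.

Lemma shr_cons1 p : shr (1%nat :: p) = shr p.
Proof. reflexivity. Qed.
Lemma shr_cons x p : (2 <= x)%nat -> shr (x :: p) = pred x :: shr p.
Proof. intros. unfold shr; simpl. destruct (Nat.eqb_spec x 1); [lia|]; reflexivity. Qed.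

Lemma lsc a l : list_sum (a :: l) = (a + list_sum l)%nat.
Proof. reflexivity. Qed.

Lemma list_sum_zero (l : list nat) (f : nat -> nat) : (forall x, In x l -> f x = 0%nat) -> list_sum (map f l) = 0%nat.
Proof. induction l; simpl; intros; auto. rewrite H, IHl; auto. Qed.

Lemma list_sum_mul c (l : list nat) (f : nat -> nat) : list_sum (map (fun x => c * f x)%nat l) = (c * list_sum (map f l))%nat.
Proof. induction l; simpl; [lia|]. rewrite IHl; lia. Qed.

Lemma filter_len_false (P : list nat -> bool) l : (forall x, P x = false) -> length (filter P l) = 0%nat.
Proof. intros H; induction l; simpl; auto. rewrite H; auto. Qed.

Lemma filter_ext' {A} (P Q : A -> bool) l : (forall x, In x l -> P x = Q x) -> filter P l = filter Q l.
Proof. induction l; simpl; intros H; auto. rewrite H, IHl; auto. Qed.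

Lemma split_lemma m : forall N s (Q : list nat -> bool),
  length (filter (fun p => Nat.eqb (length (shr p)) s && Q (shr p)) (all_seqs (S N) m))
  = (bin m s * length (filter Q (all_seqs N s)))%nat.
Proof.
  induction m; intros N s Q.
  - simpl. change (shr []) with (@nil nat). destruct s; simpl.
    + destruct (Q []); simpl; auto.
    + auto.
  - cbn [all_seqs]. rewrite len_filter_flat. cbn [seq map list_sum].
    rewrite <- seq_shift, map_map.
    rewrite IHm.
    destruct s.
    + rewrite lsc. rewrite list_sum_zero.
      * rewrite !bin_0; lia.
      * intros x Hx. apply in_seq in Hx.
        apply filter_len_false. intros p. rewrite shr_cons by lia. reflexivity.
    + rewrite lsc. erewrite map_ext_in.
      2:{ intros x Hx. apply in_seq in Hx.
          rewrite (filter_ext (fun p => Nat.eqb (length (shr (S x :: p))) (S s) && Q (shr (S x :: p)))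
                      (fun p => Nat.eqb (length (shr p)) s && (fun q => Q (x :: q)) (shr p))).
          2:{ intros p. rewrite shr_cons by lia. reflexivity. }
          rewrite (IHm N s (fun q => Q (x :: q))). reflexivity. }
      rewrite list_sum_mul. cbn [all_seqs]. rewrite len_filter_flat.
      simpl bin. lia.
Qed.

Lemma Z_shr p : (Defs.Z p + length (shr p))%nat = length p.
Proof.
  induction p as [|x p IH]; auto. unfold Defs.Z, shr in *; simpl.
  destruct (Nat.eqb_spec x 1); simpl; lia.
Qed.

Lemma cl_shr p i : (1 <= i)%nat -> count_le p i = (Defs.Z p + count_le (shr p) (i-1))%nat.
Proof.
  intros Hi. induction p as [|x p IH]; auto. unfold Defs.Z, shr, count_le in *; simpl.
  destruct (Nat.eqb_spec x 1).
  - subst. destruct i; [lia|]. simpl. rewrite IH. reflexivity.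
  - simpl. destruct (Nat.leb_spec x i); destruct (Nat.leb_spec (pred x) (i-1)); simpl; lia.
Qed.

Lemma cl0 p : Forall (fun x => 1 <= x)%nat p -> count_le (shr p) 0 = 0%nat.
Proof.
  induction 1; auto. unfold count_le, shr in *; simpl.
  destruct (Nat.eqb_spec x 1); simpl; auto.
  destruct (Nat.leb_spec (pred x) 0); simpl; auto. lia.
Qed.

Lemma forallb_ext_in {A} (f g : A -> bool) l : (forall x, In x l -> f x = g x) -> forallb f l = forallb g l.
Proof. induction l; simpl; intros H; auto. rewrite H, IHl; auto. Qed.

Lemma forallb_map' {A B} (f : B -> bool) (h : A -> B) l : forallb f (map h l) = forallb (fun x => f (h x)) l.
Proof. induction l; simpl; auto. rewrite IHl; auto. Qed.

Lemma condA_rec a N p : Forall (fun x => 1 <= x)%nat p ->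
  condA a (S N) p = (Nat.leb 2 (a + Defs.Z p) && condA (a + Defs.Z p - 1) N (shr p)).
Proof.
  intros Hp. unfold condA. cbn [seq forallb]. rewrite <- seq_shift, forallb_map'.
  rewrite (cl_shr p 1) by lia. simpl (1-1)%nat. rewrite cl0 by auto.
  replace (Nat.leb (1+1) (Defs.Z p + 0 + a)) with (Nat.leb 2 (a + Defs.Z p)) by (f_equal; lia).
  destruct (Nat.leb_spec 2 (a + Defs.Z p)); cbn [andb]; auto.
  apply forallb_ext_in. intros i Hi. apply in_seq in Hi.
  rewrite (cl_shr p (S i)) by lia. replace (S i - 1)%nat with i by lia.
  apply Bool.eq_iff_eq_true; rewrite !Nat.leb_le; lia.
Qed.

Lemma sumN_ext f g n : (forall s, (s < n)%nat -> f s = g s) -> sumN f n = sumN g n.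
Proof. induction n; simpl; intros; auto. rewrite IHn, H; auto. Qed.

Lemma sumN_plus f g n : sumN (fun s => f s + g s)%nat n = (sumN f n + sumN g n)%nat.
Proof. induction n; simpl; auto. rewrite IHn; lia. Qed.

Lemma sumN_ind v b n : sumN (fun s => if Nat.eqb v s && b then 1 else 0)%nat n
   = if Nat.ltb v n && b then 1%nat else 0%nat.
Proof.
  induction n; simpl.
  - destruct b; auto.
  - rewrite IHn. destruct b; rewrite ?Bool.andb_true_r, ?Bool.andb_false_r; auto.
    destruct (Nat.ltb_spec v n); destruct (Nat.ltb_spec v (S n)); destruct (Nat.eqb_spec v n); lia.
Qed.

Lemma len_filter_cons {A} (P : A -> bool) a l :
  length (filter P (a :: l)) = ((if P a then 1 else 0) + length (filter P l))%nat.
Proof. simpl. destruct (P a); auto. Qed.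

Lemma decomp (f : list nat -> nat) (P : list nat -> bool) l m :
  (forall p, In p l -> (f p <= m)%nat) ->
  length (filter P l) = sumN (fun s => length (filter (fun p => Nat.eqb (f p) s && P p) l)) (S m).
Proof.
  induction l as [|a l IH]; intros H.
  - simpl. clear. induction m; simpl in *; lia.
  - rewrite (sumN_ext _ (fun s => (if Nat.eqb (f a) s && P a then 1 else 0) + length (filter (fun p => Nat.eqb (f p) s && P p) l))%nat).
    2:{ intros; apply (len_filter_cons (fun p => Nat.eqb (f p) s && P p)). }
    rewrite sumN_plus, sumN_ind, len_filter_cons, <- IH.
    + f_equal. specialize (H a (or_introl eq_refl)).
      destruct (Nat.ltb_spec (f a) (S m)); [|lia]. destruct (P a); auto.
    + intros; apply H; right; auto.
Qed.

Definition FF (a m : nat) : nat :=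
  length (filter (condA a (a + m - 1)) (all_seqs (a + m - 1) m)).

Lemma FF_rec a m : (1 <= a)%nat ->
  FF a (S m) = sumN (fun s => if Nat.leb 2 (a + (S m - s)) then (bin (S m) s * FF (a + (S m - s) - 1) s)%nat else 0%nat) (S (S m)).
Proof.
  intros Ha. unfold FF at 1.
  replace (a + S m - 1)%nat with (S (a + m - 1)) by lia.
  rewrite (decomp (fun p => length (shr p)) _ _ (S m)).
  2:{ intros p Hp. apply all_seqs_in in Hp as [Hl _]. pose proof (Z_shr p); lia. }
  apply sumN_ext. intros s Hs.
  rewrite (filter_ext' _ (fun p => Nat.eqb (length (shr p)) s &&
     (fun q => if Nat.leb 2 (a + (S m - s)) then condA (a + (S m - s) - 1) (a + m - 1) q else false) (shr p))).
  2:{ intros p Hp. apply all_seqs_in in Hp as [Hl Hf].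
      rewrite condA_rec.
      2:{ eapply Forall_impl; [|exact Hf]. simpl; intros; lia. }
      destruct (Nat.eqb_spec (length (shr p)) s); simpl; auto.
      assert (Defs.Z p = S m - s)%nat by (pose proof (Z_shr p); lia).
      rewrite H. destruct (Nat.leb 2 (a + (S m - s))); auto. }
  rewrite (split_lemma (S m) (a + m - 1) s (fun q => if Nat.leb 2 (a + (S m - s)) then condA (a + (S m - s) - 1) (a + m - 1) q else false)).
  destruct (Nat.leb_spec 2 (a + (S m - s))).
  - unfold FF. f_equal. replace (a + (S m - s) - 1 + s - 1)%nat with (a + m - 1)%nat by lia. reflexivity.
  - rewrite filter_len_false; auto. lia.
Qed.

Fixpoint sumR (f : nat -> R) (n : nat) : R :=
  match n with O => 0 | S n' => sumR f n' + f n' end.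

Lemma sumR_ext f g n : (forall s, (s < n)%nat -> f s = g s) -> sumR f n = sumR g n.
Proof. induction n; simpl; intros; auto. rewrite IHn, H; auto. Qed.

Lemma sumR_lin a b f g n : sumR (fun s => a * f s + b * g s) n = a * sumR f n + b * sumR g n.
Proof. induction n; simpl; [ring|]. rewrite IHn; ring. Qed.

Lemma INR_sumN f n : INR (sumN f n) = sumR (fun s => INR (f s)) n.
Proof. induction n; simpl; auto. rewrite plus_INR, IHn; auto. Qed.

Lemma bin_over m s : (m < s)%nat -> bin m s = 0%nat.
Proof.
  revert s; induction m; intros s H; destruct s; simpl; try lia; auto.
  rewrite !IHm; lia.
Qed.

Lemma pascal_sum m (f : nat -> R) N :
  sumR (fun s => INR (bin (S m) s) * f s) (S N)
  = sumR (fun s => INR (bin m s) * f s) (S N) + sumR (fun s => INR (bin m s) * f (S s)) N.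
Proof.
  induction N.
  - simpl. rewrite !bin_0. simpl. ring.
  - cbn [sumR] in *. rewrite IHN. cbn [bin]. rewrite plus_INR. ring.
Qed.

Lemma binomialR m x : sumR (fun s => INR (bin m s) * x ^ s) (S m) = (x + 1) ^ m.
Proof.
  induction m.
  - simpl. ring.
  - rewrite pascal_sum.
    assert (E1 : sumR (fun s => INR (bin m s) * x ^ s) (S (S m)) = (x+1)^m).
    { change (sumR (fun s => INR (bin m s) * x ^ s) (S m) + INR (bin m (S m)) * x ^ (S m) = (x+1)^m).
      rewrite IHm, bin_over by lia. simpl; ring. }
    rewrite E1.
    rewrite (sumR_ext _ (fun s => x * (INR (bin m s) * x ^ s) + 0 * 0)).
    2:{ intros; simpl; ring. }
    rewrite sumR_lin, IHm. simpl. ring.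
Qed.

Definition hR (x : R) (s : nat) : R :=
  match s with O => 1 | S k => (x - INR (S k)) * x ^ k end.

Lemma hR_succ x s : hR x (S s) = x * hR x s - x ^ s.
Proof. destruct s; simpl hR; rewrite ?S_INR; simpl; ring. Qed.

Definition SS (m : nat) (x : R) := sumR (fun s => INR (bin m s) * hR x s) (S m).

Lemma SS_rec m x : SS (S m) x = (x + 1) * SS m x - (x + 1) ^ m.
Proof.
  unfold SS. rewrite pascal_sum.
  assert (E1 : sumR (fun s => INR (bin m s) * hR x s) (S (S m)) = sumR (fun s => INR (bin m s) * hR x s) (S m)).
  { change (sumR (fun s => INR (bin m s) * hR x s) (S m) + INR (bin m (S m)) * hR x (S m) = sumR (fun s => INR (bin m s) * hR x s) (S m)).
    rewrite bin_over by lia. simpl; ring. }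
  rewrite E1.
  rewrite (sumR_ext (fun s => INR (bin m s) * hR x (S s)) (fun s => x * (INR (bin m s) * hR x s) + (-1) * (INR (bin m s) * x ^ s))).
  2:{ intros; rewrite hR_succ; ring. }
  rewrite sumR_lin, binomialR. ring.
Qed.

Lemma SS_val m x : SS (S m) x = (x - INR m) * (x + 1) ^ m.
Proof.
  induction m.
  - unfold SS. simpl. ring.
  - rewrite SS_rec, IHm. rewrite S_INR. simpl. ring.
Qed.

Definition gR (x : R) (m : nat) : R := match m with O => 1 | S k => x * (x + INR (S k)) ^ k end.

Lemma FF_val n : forall a m, (a + m <= n)%nat -> (1 <= a)%nat -> INR (FF a m) = gR (INR a) m.
Proof.
  induction n; intros a m Hn Ha; [lia|].
  destruct m.
  - unfold FF. simpl all_seqs.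
    assert (H : condA a (a + 0 - 1) [] = true).
    2:{ cbn [filter]. rewrite H. reflexivity. }
    { unfold condA. apply forallb_forall. intros i Hi. apply in_seq in Hi.
      apply Nat.leb_le. unfold count_le; simpl. lia. }
  - rewrite FF_rec by auto. rewrite INR_sumN.
    set (x := INR a + INR m).
    rewrite (sumR_ext _ (fun s => INR (bin (S m) s) * hR x s)).
    + change (SS (S m) x = gR (INR a) (S m)). rewrite SS_val. unfold gR, x. rewrite S_INR. replace (INR a + (INR m + 1)) with (INR a + INR m + 1) by ring. ring.
    + intros s Hs. destruct (Nat.leb_spec 2 (a + (S m - s))).
      * rewrite mult_INR, IHn by lia. f_equal.
        destruct s as [|k]; [reflexivity|]. unfold gR, hR.
        assert (E : INR (a + (S m - S k) - 1) + INR (S k) = x).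
        { unfold x. rewrite <- !plus_INR. f_equal. lia. }
        rewrite E. rewrite <- E at 2. ring.
      * assert (a = 1%nat) by lia. subst a. replace s with (S m) by lia.
        unfold hR, x. rewrite !S_INR. simpl (INR 0). ring.
Qed.

Fixpoint fp (x : R) (k : nat) : R := match k with O => 1 | S i => fp x i * (x - INR i) end.

Lemma fp_top x k : fp x (S k) = x * fp (x - 1) k.
Proof.
  revert x; induction k; intros x; simpl; [ring|].
  simpl in IHk. rewrite IHk. destruct k; simpl; ring.
Qed.

Lemma lim_inv_n : is_lim_seq (fun n => / INR n) 0.
Proof.
  replace (Finite 0) with (Rbar_inv p_infty) by reflexivity.
  apply is_lim_seq_inv. apply is_lim_seq_INR. discriminate.
Qed.

Lemma rn_lim k : is_lim_seq (fun n => fp (INR n) k / INR n ^ k) 1.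
Proof.
  induction k.
  - eapply is_lim_seq_ext; [|apply is_lim_seq_const]. intros n; simpl. field.
  - apply is_lim_seq_ext_loc with (fun n => (fp (INR n) k / INR n ^ k) * (1 - INR k * / INR n)).
    + exists 1%nat. intros n Hn. assert (0 < INR n) by (apply lt_0_INR; lia).
      simpl. field. split; [apply pow_nonzero|]; lra.
    + replace (Finite 1) with (Finite (1 * (1 - INR k * 0))) by (f_equal; ring).
      apply (is_lim_seq_mult' _ _ 1 (1 - INR k * 0)); auto.
      apply (is_lim_seq_minus' _ _ 1 (INR k * 0)). apply is_lim_seq_const.
      replace (Finite (INR k * 0)) with (Rbar_mult (INR k) 0) by reflexivity.
      apply (is_lim_seq_scal_l _ (INR k) 0). apply lim_inv_n.
Qed.

Lemma exp_pow y n : exp (INR n * y) = exp y ^ n.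
Proof.
  induction n. simpl. rewrite Rmult_0_l, exp_0; auto.
  rewrite S_INR, Rmult_plus_distr_r, Rmult_1_l, exp_plus, IHn. simpl. ring.
Qed.

Lemma ub n : (1 <= n)%nat -> (1 + / INR n)^n <= exp 1.
Proof.
  intros Hn. assert (0 < INR n) by (apply lt_0_INR; lia).
  replace (exp 1) with (exp (INR n * / INR n)) by (f_equal; field; lra).
  rewrite exp_pow. apply pow_incr. split.
  - assert (0 < / INR n) by (apply Rinv_0_lt_compat; lra). lra.
  - apply exp_ineq1_le.
Qed.

Lemma lb n : (1 <= n)%nat -> exp 1 <= (1 + / INR n)^(S n).
Proof.
  intros Hn. assert (0 < INR n) by (apply lt_0_INR; lia).
  assert (HS : INR (S n) = INR n + 1) by (rewrite S_INR; auto).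
  replace (exp 1) with (exp (INR (S n) * / INR (S n))) by (f_equal; field; lra).
  rewrite exp_pow. apply pow_incr. split.
  - left; apply exp_pos.
  - set (z := / INR (S n)).
    assert (Hz : z = / (INR n + 1)) by (unfold z; rewrite HS; auto).
    assert (H1 : 1 + - z <= exp (- z)) by apply exp_ineq1_le.
    assert (H2 : 1 + - z = INR n / (INR n + 1)) by (rewrite Hz; field; lra).
    assert (H3 : 0 < INR n / (INR n + 1)) by (apply Rdiv_lt_0_compat; lra).
    assert (Hez : exp z = / exp (- z)) by (rewrite exp_Ropp, Rinv_inv; auto).
    rewrite Hez. replace (1 + / INR n) with (/ (INR n / (INR n + 1))) by (field; lra).
    apply Rinv_le_contravar; lra.
Qed.

Definition qn (n : nat) : R := (INR n / (INR n + 1)) ^ (n - 1).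

Lemma q_lim : is_lim_seq qn (/ exp 1).
Proof.
  apply is_lim_seq_incr_1.
  apply is_lim_seq_le_le with (fun _ => / exp 1) (fun m => (1 + / INR (S m)) ^ 2 / exp 1).
  - intros m. unfold qn. replace (S m - 1)%nat with m by lia.
    assert (0 < INR (S m)) by (apply lt_0_INR; lia).
    set (a := 1 + / INR (S m)).
    assert (Ha : 1 <= a) by (unfold a; assert (0 < / INR (S m)) by (apply Rinv_0_lt_compat; lra); lra).
    assert (Hq : INR (S m) / (INR (S m) + 1) = / a) by (unfold a; field; lra).
    rewrite Hq, pow_inv.
    assert (Hp : 0 < a ^ m) by (apply pow_lt; lra).
    assert (He : 0 < exp 1) by apply exp_pos.
    pose proof (ub (S m) ltac:(lia)) as U. pose proof (lb (S m) ltac:(lia)) as L.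
    fold a in U, L.
    assert (a ^ m <= a ^ S m) by (simpl; rewrite <- (Rmult_1_l (a ^ m)) at 1; apply Rmult_le_compat_r; lra).
    assert (E : a ^ S (S m) = a ^ 2 * a ^ m) by (simpl; ring).
    split.
    + apply Rinv_le_contravar; lra.
    + apply (Rmult_le_reg_r (exp 1 * a ^ m)); [nra|].
      replace (/ a ^ m * (exp 1 * a ^ m)) with (exp 1) by (field; lra).
      replace (a ^ 2 / exp 1 * (exp 1 * a ^ m)) with (a ^ S (S m)) by (rewrite E; field; lra).
      lra.
  - apply is_lim_seq_const.
  - replace (Finite (/ exp 1)) with (Finite ((1 + 0) ^ 2 / exp 1)) by (f_equal; simpl; field; apply Rgt_not_eq, exp_pos).
    apply is_lim_seq_div'; [|apply is_lim_seq_const|apply Rgt_not_eq, exp_pos].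
    eapply is_lim_seq_ext. { intros n; simpl; reflexivity. }
    apply is_lim_seq_mult'; [|apply is_lim_seq_mult'; [|apply is_lim_seq_const]];
    (apply is_lim_seq_plus'; [apply is_lim_seq_const|]);
    apply (is_lim_seq_incr_1 (fun n => / INR n)); apply lim_inv_n.
Qed.

Lemma bin_diag t : bin t t = 1%nat.
Proof. induction t; simpl; auto. rewrite IHt, bin_over; lia. Qed.

Lemma fact_bin n : forall s t, (s + t = n)%nat -> (bin (s + t) t * fact s * fact t)%nat = fact (s + t).
Proof.
  induction n using lt_wf_ind; intros s t Hst.
  destruct t as [|t']. { rewrite bin_0, Nat.add_0_r. simpl; lia. }
  destruct s as [|s']. { simpl (0 + S t')%nat. rewrite bin_diag. simpl; lia. }
  assert (H1 := H (S s' + t')%nat ltac:(lia) (S s') t' eq_refl).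
  assert (H2 := H (s' + S t')%nat ltac:(lia) s' (S t') eq_refl).
  replace (S s' + t')%nat with (s' + S t')%nat in H1 by lia.
  replace (S s' + S t')%nat with (S (s' + S t')) by lia.
  cbn [bin]. set (L := (s' + S t')%nat) in *.
  replace (fact (S L)) with (S L * fact L)%nat by reflexivity.
  replace (fact (S s')) with (S s' * fact s')%nat in * by reflexivity.
  replace (fact (S t')) with (S t' * fact t')%nat in * by reflexivity.
  unfold L in *. nia.
Qed.

Lemma fact_fp t k : INR (fact (t + k)) = INR (fact t) * fp (INR (t + k)) k.
Proof.
  induction k.
  - rewrite Nat.add_0_r. simpl; ring.
  - rewrite Nat.add_succ_r, fact_simpl, mult_INR, IHk, fp_top.
    replace (INR (S (t + k)) - 1) with (INR (t + k)) by (rewrite S_INR; ring). ring.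
Qed.

Lemma binfp k t : INR (bin (k + t) t) * INR (fact k) = fp (INR (k + t)) k.
Proof.
  pose proof (fact_bin _ k t eq_refl) as H.
  apply (f_equal INR) in H. rewrite !mult_INR in H.
  replace (k + t)%nat with (t + k)%nat in H at 2 by lia. rewrite fact_fp in H.
  replace (t + k)%nat with (k + t)%nat in H by lia.
  pose proof (INR_fact_neq_0 t).
  apply (Rmult_eq_reg_r (INR (fact t))); auto. rewrite H. ring.
Qed.

Lemma filter_filter' {A} (f g : A -> bool) l : filter f (filter g l) = filter (fun x => g x && f x) l.
Proof. induction l; simpl; auto. destruct (g a); simpl; rewrite ?IHl; auto. Qed.

Lemma is_pf_condA n p : In p (all_seqs n n) -> is_pf n p = condA 1 n p.
Proof.
  intros Hp. apply all_seqs_in in Hp as [Hl Hf]. unfold is_pf, condA.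
  rewrite Hl, Nat.eqb_refl.
  replace (forallb (fun x => Nat.leb 1 x && Nat.leb x n) p) with true.
  - rewrite !Bool.andb_true_l. apply forallb_ext_in. intros i _.
    apply Bool.eq_iff_eq_true; rewrite !Nat.leb_le; lia.
  - symmetry. apply forallb_forall. intros x Hx. rewrite Forall_forall in Hf.
    apply Hf in Hx. apply andb_true_intro; split; apply Nat.leb_le; lia.
Qed.

Lemma PF_len n : INR (length (PF n)) = gR 1 n.
Proof.
  unfold PF. rewrite (filter_ext' _ (condA 1 n)) by apply is_pf_condA.
  pose proof (FF_val (1 + n) 1 n (le_n _) (le_n _)) as H.
  unfold FF in H. replace (1 + n - 1)%nat with n in H by lia. rewrite H. reflexivity.
Qed.

Lemma count_k n k : (1 <= k)%nat -> (k < n)%nat ->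
  INR (length (filter (fun p => Nat.eqb (Defs.Z p) k) (PF n))) = INR (bin n (n - k)) * gR (INR k) (n - k).
Proof.
  intros Hk Hkn. destruct n as [|N]; [lia|].
  unfold PF. rewrite filter_filter'.
  rewrite (filter_ext' _ (fun p => Nat.eqb (length (shr p)) (S N - k) && condA k N (shr p))).
  2:{ intros p Hp. rewrite is_pf_condA by auto. apply all_seqs_in in Hp as [Hl Hf].
      rewrite condA_rec.
      2:{ eapply Forall_impl; [|exact Hf]. simpl; intros; lia. }
      pose proof (Z_shr p) as HZ.
      destruct (Nat.eqb_spec (Defs.Z p) k); destruct (Nat.eqb_spec (length (shr p)) (S N - k)); try lia.
      - subst k. replace (1 + Defs.Z p - 1)%nat with (Defs.Z p) by lia.
        destruct (Nat.leb_spec 2 (1 + Defs.Z p)); [|lia]. simpl. now rewrite Bool.andb_true_r.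
      }
  rewrite (split_lemma (S N) N (S N - k) (condA k N)).
  rewrite mult_INR. f_equal.
  rewrite <- FF_val with (n := (k + (S N - k))%nat) by lia.
  unfold FF. replace (k + (S N - k) - 1)%nat with N by lia. reflexivity.
Qed.

Theorem mainTheorem12 (j : nat) :
  Un_cv (fun n => probZ n (1 + j)) (/ (exp 1 * INR (fact j))).
Proof.
  apply is_lim_seq_Reals.
  set (k := (1 + j)%nat).
  apply is_lim_seq_ext_loc with (fun n => / INR (fact j) * (fp (INR n) k / INR n ^ k) * qn n).
  - exists (S k). intros n Hn. unfold probZ.
    rewrite count_k by (unfold k in *; lia). rewrite PF_len.
    assert (Hn' : n = (k + S (n - S k))%nat) by lia.
    set (t := (n - S k)%nat) in Hn'. clearbody t. subst n.
    replace (k + S t - k)%nat with (S t) by lia.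
    rewrite <- (binfp k (S t)).
    assert (Hfk : INR (fact k) = INR k * INR (fact j)) by (unfold k; simpl (1 + j)%nat; rewrite fact_simpl, mult_INR; auto).
    rewrite Hfk.
    replace (INR k + INR (S t)) with (INR (S (k + t))) by (rewrite <- plus_INR; f_equal; lia).
    rewrite Nat.add_succ_r.
    unfold qn, gR. replace (S (k+t) - 1)%nat with (k+t)%nat by lia.
    set (N := INR (S (k + t))).
    assert (HN : 0 < N) by (apply lt_0_INR; lia).
    replace (1 + N) with (N + 1) by ring.
    replace (INR k + INR (S t)) with N by (unfold N; rewrite <- plus_INR; f_equal; lia).
    unfold Rdiv. rewrite Rpow_mult_distr, pow_inv, !pow_add.
    pose proof (INR_fact_neq_0 j).
    assert (INR k <> 0) by (apply not_0_INR; unfold k; lia).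
    field. repeat split; try apply pow_nonzero; lra.
  - replace (Finite (/ (exp 1 * INR (fact j)))) with (Finite (/ INR (fact j) * 1 * / exp 1)).
    2:{ f_equal. pose proof (INR_fact_neq_0 j). pose proof (exp_pos 1). field. split; lra. }
    apply is_lim_seq_mult'; [|apply q_lim].
    apply is_lim_seq_mult'; [apply is_lim_seq_const|apply rn_lim].
Qed.
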